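(* For every integer $n\ge1$, $\|[\mathcal D,\pi(K^nL^n)]\|=1$.
   Context: $\Omega=\{0,1\}^{\mathbb N}$ with the shift $\sigma$; for $a\in\{0,1\}$, $ax=(a,x_1,\dots)$. $\mu$ is the measure of maximal entropy (uniform Bernoulli product measure), $L^2(\mu)$ the Hilbert space of square-integrable functions. Ruelle operator $L\phi(x)=\frac12(\phi(0x)+\phi(1x))$; Koopman operator $K\phi=\phi\circ\sigma$. On $\mathcal H=L^2(\mu)\times L^2(\mu)$ (norm $|(\phi_1,\phi_2)|^2=|\phi_1|^2+|\phi_2|^2$), $\mathcal D=\begin{pmatrix}0&K\\ L&0\end{pmatrix}$, $\pi(A)=\begin{pmatrix}A&0\\0&A\end{pmatrix}$ for bounded $A$ on $L^2(\mu)$, $[\mathcal D,\pi(A)]=\mathcal D\pi(A)-\pi(A)\mathcal D$; $\|\cdot\|$ is the operator norm. *)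

(* Defs.v *)
From HB Require Import structures.
From mathcomp Require Import all_boot all_order all_algebra.
From mathcomp Require Import all_classical all_reals all_analysis.
Set Implicit Arguments. Unset Strict Implicit. Unset Printing Implicit Defensive.
Import Order.TTheory GRing.Theory Num.Theory.
Local Open Scope classical_set_scope.
Local Open Scope ring_scope.

(* Cylinder set [w_0 ... w_{n-1}] in {0,1}^N (bool = {0,1}, false = 0). *)
Definition cyl (n : nat) (w : nat -> bool) : set (nat -> bool) :=
  [set x | forall i, (i < n)%N -> x i = w i].

Definition cylinders : set (set (nat -> bool)) :=
  [set C | exists n w, C = cyl n w].

Definition Omega := g_sigma_algebraType cylinders.

Definition shift (x : Omega) : Omega := fun i => x i.+1.
Definition pcons (a : bool) (x : Omega) : Omega :=
  fun i => if i is i'.+1 then x i' else a.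

Section Ops.
Variable R : realType.

Definition Lop (phi : Omega -> R) : Omega -> R :=
  fun x => (phi (pcons false x) + phi (pcons true x)) / 2.
Definition Kop (phi : Omega -> R) : Omega -> R := phi \o shift.

Definition KnLn (n : nat) (phi : Omega -> R) : Omega -> R :=
  iter n Kop (iter n Lop phi).

(* [D, pi(A)] (phi1, phi2) = D (A phi1, A phi2) - pi(A) D (phi1, phi2)
   with D (psi1, psi2) = (K psi2, L psi1). *)
Definition commD (A : (Omega -> R) -> (Omega -> R))
  (v : (Omega -> R) * (Omega -> R)) : (Omega -> R) * (Omega -> R) :=
  (Kop (A v.2) \- A (Kop v.2), Lop (A v.1) \- A (Lop v.1)).

Variable mu : {measure set Omega -> \bar R}.

Definition l2sq (f : Omega -> R) : \bar R := (\int[mu]_x ((f x) ^+ 2)%:E)%E.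

Definition inL2 (f : Omega -> R) : Prop :=
  measurable_fun setT f /\ (l2sq f < +oo)%E.

Definition inH (v : (Omega -> R) * (Omega -> R)) : Prop := inL2 v.1 /\ inL2 v.2.

Definition hnorm (v : (Omega -> R) * (Omega -> R)) : \bar R :=
  match (l2sq v.1 + l2sq v.2)%E with
  | r%:E => (Num.sqrt r)%:E
  | _ => +oo%E
  end.

Definition opnorm (T : (Omega -> R) * (Omega -> R) -> (Omega -> R) * (Omega -> R))
  : \bar R :=
  ereal_sup [set hnorm (T v) | v in [set v | inH v /\ (hnorm v <= 1)%E]].

End Ops.

(* Main.v *)
Require Import Defs.
From HB Require Import structures.
From mathcomp Require Import all_boot all_order all_algebra.
From mathcomp Require Import all_classical all_reals all_analysis.
From mathcomp Require Import measurable_realfun ring lra.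
Import Order.TTheory GRing.Theory Num.Theory.
Local Open Scope classical_set_scope.
Local Open Scope ring_scope.

Lemma cyl_meas n w : measurable (cyl n w : set Omega).
Proof. by apply: sub_sigma_algebra; exists n, w. Qed.

Lemma pcons_pre0 a w : pcons a @^-1` cyl 0 w = setT.
Proof. by apply/seteqP; split. Qed.

Lemma pcons_preS a n w : pcons a @^-1` cyl n.+1 w =
  if a == w 0%N then cyl n (fun i => w i.+1) else set0.
Proof.
have [aw|aw] := eqVneq a (w 0%N).
  apply/seteqP; split => x /=.
    by move=> h i lin; exact: (h i.+1).
  by move=> h -[|i] lin //=; apply: h.
apply/seteqP; split => x //= h; move: (h 0%N isT) => /= E.
by rewrite E eqxx in aw.
Qed.

Lemma pcons_meas a : measurable_fun setT (pcons a).
Proof.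
apply: (@measurability _ _ Omega Omega setT _ cylinders erefl).
move=> _ [A [n [w ->]] <-]; rewrite setTI.
case: n => [|n]; first by rewrite pcons_pre0; exact: measurableT.
rewrite pcons_preS; case: ifP => _; [exact: cyl_meas|exact: measurable0].
Qed.

Lemma shift_meas : measurable_fun setT Defs.shift.
Proof.
apply: (@measurability _ _ Omega Omega setT _ cylinders erefl).
move=> _ [A [n [w ->]] <-].
have -> : setT `&` Defs.shift @^-1` cyl n w =
   cyl n.+1 (pcons false w) `|` cyl n.+1 (pcons true w).
  apply/seteqP; split => x /=.
    move=> [_ h]; case E: (x 0%N); [right|left] => -[|i] lin //=; exact: h.
  by case=> h; split => // i lin; exact: (h i.+1).
by apply: measurableU; exact: cyl_meas.
Qed.

Lemma cylI n w m v : cyl n w `&` cyl m v = set0 \/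
  cyl n w `&` cyl m v = cyl (maxn n m) (fun i => if (i < n)%N then w i else v i).
Proof.
have [H|H] := pselect (forall i, (i < n)%N -> (i < m)%N -> w i = v i).
  right; apply/seteqP; split => x /=.
    move=> [h1 h2] i; rewrite leq_max => /orP[] lt; case: ifP => lin.
    - exact: h1. - by rewrite lt in lin. - exact: h1.
    - by apply: h2.
  move=> h; split => i lt.
    by move: (h i); rewrite lt => ->//; rewrite leq_max lt.
  move: (h i); rewrite leq_max lt orbT => /(_ isT).
  by case: ifP => // lin ->; apply: H.
left; apply/seteqP; split => x //= [h1 h2]; apply: H => i l1 l2.
by rewrite -h1 // h2.
Qed.

Section Meas.
Context (R : realType) (mu : {measure set Omega -> \bar R}).
Hypothesis hmu : forall (n : nat) (w : nat -> bool), mu (cyl n w) = ((2 ^-1) ^+ n)%:E.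

Definition pf a : {measure set Omega -> \bar R} :=
  measure_function_pushforward__canonical__measure_function_Measure mu (pcons_meas a).

Lemma cylT : cyl 0 (fun _ => false) = setT.
Proof. by apply/seteqP; split. Qed.

Lemma muT : mu setT = 1%E.
Proof. by rewrite -cylT hmu. Qed.

Lemma key A : measurable A ->
  measure_add mu mu A = measure_add (pf false) (pf true) A.
Proof.
move=> mA.
pose G' := [set C : set Omega | C = set0 \/ cylinders C].
apply: (@g_sigma_algebra_measure_unique _ _ _ G' _ (fun _ => setT)).
- by move=> C [->|[n [w ->]]]; [exact: measurable0|exact: cyl_meas].
- by move=> _; right; exists 0%N, (fun _ => false); rewrite cylT.
- by rewrite bigcup_const.
- move=> C D [->|[n [w ->]]] [->|[m [v ->]]]; try by left; rewrite ?set0I ?setI0.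
  by case: (cylI n w m v) => ->; [left|right; eexists; eexists].
- move=> C [->|[n [w ->]]]; first by rewrite !measure0.
  rewrite /= /msum /= !big_ord_recl !big_ord0 !adde0 /pushforward /=.
  rewrite /pushforward; case: n => [|n].   by rewrite !pcons_pre0 hmu muT expr0.
  rewrite !pcons_preS hmu; case: (w 0%N) => /=; rewrite measure0 ?add0e ?adde0 hmu -EFinD;
  congr (_%:E); rewrite exprS; by field.
- by move=> _; rewrite /= /msum /= !big_ord_recl !big_ord0 !adde0 muT -EFinD ltry.
- apply: (sub_sigma_algebra2 (D:=setT) (M:=cylinders)); [by move=> C HC; right|exact: mA].
Qed.

Lemma measL (f : Omega -> R) : measurable_fun setT f -> measurable_fun setT (Lop f).
Proof.
move=> mf; rewrite /Lop.
apply: (@measurable_funM _ _ _ _ (fun x => f (pcons false x) + f (pcons true x)) (cst 2^-1)).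
  apply: measurable_funD; apply: measurableT_comp => //; exact: pcons_meas.
exact: measurable_cst.
Qed.

Lemma measK (f : Omega -> R) : measurable_fun setT f -> measurable_fun setT (Kop f).
Proof. by move=> mf; apply: measurableT_comp => //; exact: shift_meas. Qed.

Local Notation I f := (\int[mu]_x ((f x)%:E))%E.

Lemma intA (F : Omega -> R) : measurable_fun setT F -> (forall x, 0 <= F x) ->
  (I F + I F = I (F \o pcons false) + I (F \o pcons true))%E.
Proof.
move=> mF F0.
have mEF : measurable_fun setT (EFin \o F) by apply/measurable_EFinP.
rewrite -(ge0_integral_measure_add mu mu measurableT) //; last by move=> x _; rewrite lee_fin.
rewrite (eq_measure_integral (measure_add (pf false) (pf true))); last first.
  by move=> A mA _; exact: key.
rewrite ge0_integral_measure_add //; last by move=> x _; rewrite lee_fin.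
congr (_ + _)%E; rewrite /pf ge0_integral_pushforward ?preimage_setT //;
  try exact: pcons_meas; by move=> y _; rewrite lee_fin.
Qed.

Lemma half_double (a : \bar R) : (0 <= a)%E -> (2^-1%:E * (a + a))%E = a.
Proof.
case: a => [r| |] //= _; last by rewrite gt0_muley // lte_fin invr_gt0.
by rewrite -EFinD -EFinM; congr (_%:E); field.
Qed.

Lemma intL (F : Omega -> R) : measurable_fun setT F -> (forall x, 0 <= F x) ->
  I (Lop F) = I F.
Proof.
move=> mF F0.
have m0 : measurable_fun setT (EFin \o (F \o pcons false)).
  by apply/measurable_EFinP; apply: measurableT_comp => //; exact: pcons_meas.
have m1 : measurable_fun setT (EFin \o (F \o pcons true)).
  by apply/measurable_EFinP; apply: measurableT_comp => //; exact: pcons_meas.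
have mS : measurable_fun setT (fun x => (F (pcons false x) + F (pcons true x))%:E).
  apply/measurable_EFinP; apply: measurable_funD;
  by apply: measurableT_comp => //; exact: pcons_meas.
have e1 : I (Lop F) = (\int[mu]_x (2^-1%:E * (F (pcons false x) + F (pcons true x))%:E))%E.
  by apply: eq_integral => x _; rewrite /Lop -EFinM mulrC.
have e2 : (\int[mu]_x ((F (pcons false x) + F (pcons true x))%:E))%E =
   (I (F \o pcons false) + I (F \o pcons true))%E.
  rewrite -(ge0_integralD mu measurableT); first last.
  all: try (by move=> x _; rewrite lee_fin; apply: F0).
  all: try (by apply/measurable_EFinP; apply: measurableT_comp => //; exact: pcons_meas).
  by apply: eq_integral => x _; rewrite EFinD.
rewrite e1 (ge0_integralZl mu measurableT mS); first last.
- by rewrite lee_fin invr_ge0.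
- by move=> x _; rewrite lee_fin addr_ge0.
rewrite e2.
rewrite -intA // half_double //; apply: integral_ge0 => x _; rewrite lee_fin.
exact: F0.
Qed.

Lemma intK (F : Omega -> R) : measurable_fun setT F -> (forall x, 0 <= F x) ->
  I (Kop F) = I F.
Proof.
move=> mF F0; rewrite -intL //; first last.
- by move=> x; exact: F0.
- exact: measK.
congr (integral _ _ _); apply: funext => x; rewrite /Lop /Kop /=; congr (_%:E).
by field.
Qed.

Lemma measiterK j (f : Omega -> R) : measurable_fun setT f -> measurable_fun setT (iter j (@Kop R) f).
Proof. by move=> mf; elim: j => [|j IH] //=; exact: measK. Qed.

Lemma measiterL j (f : Omega -> R) : measurable_fun setT f -> measurable_fun setT (iter j (@Lop R) f).
Proof. by move=> mf; elim: j => [|j IH] //=; exact: measL. Qed.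

Lemma meassq {f : Omega -> R} : measurable_fun setT f -> measurable_fun setT (fun x => f x ^+ 2).
Proof. by move=> mf; exact: measurable_funX. Qed.

Lemma l2K (f : Omega -> R) : measurable_fun setT f -> l2sq mu (Kop f) = l2sq mu f.
Proof.
move=> mf; rewrite /l2sq; exact: (intK (fun x => f x ^+ 2) (meassq mf) (fun x => sqr_ge0 (f x))).
Qed.

Lemma l2iterK j (f : Omega -> R) : measurable_fun setT f -> l2sq mu (iter j (@Kop R) f) = l2sq mu f.
Proof.
move=> mf; elim: j => [|j IH] //=; rewrite l2K //; exact: measiterK.
Qed.

Lemma l2L (f : Omega -> R) : measurable_fun setT f -> (l2sq mu (Lop f) <= l2sq mu f)%E.
Proof.
move=> mf; rewrite /l2sq -(intL (fun x => f x ^+ 2) (meassq mf) (fun x => sqr_ge0 (f x))).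
apply: (ge0_le_integral mu measurableT).
- by move=> x _; rewrite lee_fin sqr_ge0.
- by apply/measurable_EFinP; apply: meassq; exact: measL.
- by apply/measurable_EFinP; apply: measL; exact: meassq.
move=> x _; rewrite lee_fin /Lop.
set a := f (pcons false x); set b := f (pcons true x).
have := sqr_ge0 (a - b); nra.
Qed.

Lemma l2iterL j (f : Omega -> R) : measurable_fun setT f -> (l2sq mu (iter j (@Lop R) f) <= l2sq mu f)%E.
Proof.
move=> mf; elim: j => [|j IH] //=; apply: le_trans IH; apply: l2L; exact: measiterL.
Qed.

Lemma l2D (f : Omega -> R) : measurable_fun setT f -> (l2sq mu (Kop (Lop f) \- f)%R <= l2sq mu f)%E.
Proof.
move=> mf.
have mG : measurable_fun setT (fun x => (Kop (Lop f) x - f x) ^+ 2).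
  by apply: meassq; apply: measurable_funB => //; apply: measK; exact: measL.
rewrite /l2sq -(intL _ mG (fun x => sqr_ge0 _)).
rewrite -(intL (fun x => f x ^+ 2) (meassq mf) (fun x => sqr_ge0 (f x))).
apply: (ge0_le_integral mu measurableT).
- by move=> x _; rewrite lee_fin /Lop divr_ge0 // addr_ge0 // sqr_ge0.
- by apply/measurable_EFinP; apply: measL.
- by apply/measurable_EFinP; apply: measL; exact: meassq.
move=> x _; rewrite lee_fin.
have -> : Lop (fun x => (Kop (Lop f) x - f x) ^+ 2) x =
  ((Lop f x - f (pcons false x)) ^+ 2 + (Lop f x - f (pcons true x)) ^+ 2) / 2 by [].
rewrite /Lop.
set a := f (pcons false x); set b := f (pcons true x).
have := sqr_ge0 (a + b); nra.
Qed.

Lemma l2sqC (g h : Omega -> R) : l2sq mu (g \- h) = l2sq mu (h \- g).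
Proof. by apply: eq_integral => x _; rewrite /= -opprB sqrrN. Qed.

Lemma LK (f : Omega -> R) : Lop (Kop f) = f.
Proof. by apply: funext => x; rewrite /Lop /Kop /=; field. Qed.

Lemma iterK_sub j (f g : Omega -> R) :
  iter j (@Kop R) (f \- g) = iter j (@Kop R) f \- iter j (@Kop R) g.
Proof. by elim: j => [|j IH] //=; rewrite IH. Qed.

Lemma match_mono (x y : \bar R) : (0 <= x)%E -> (x <= y)%E ->
  ((match x with r%:E => (Num.sqrt r)%:E | _ => +oo end) <=
   (match y with r%:E => (Num.sqrt r)%:E | _ => +oo end))%E.
Proof.
case: y => [r| |].
- case: x => [s| |] //= s0 sr; rewrite lee_fin; apply: ler_wsqrtr; by rewrite -lee_fin.
- by move=> _ _; rewrite leey.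
- by case: x.
Qed.

Lemma l2ge0 (f : Omega -> R) : (0 <= l2sq mu f)%E.
Proof. by apply: integral_ge0 => x _; rewrite lee_fin sqr_ge0. Qed.

Lemma upper k (v : (Omega -> R) * (Omega -> R)) : measurable_fun setT v.1 ->
  measurable_fun setT v.2 ->
  (hnorm mu (commD (@KnLn R k.+1) v) <= hnorm mu v)%E.
Proof.
case: v => v1 v2 /= m1 m2; rewrite /hnorm /=.
apply: match_mono; first by apply: adde_ge0; exact: l2ge0.
rewrite [(l2sq mu v1 + _)%E]addeC; apply: leeD.
-
  set h := iter k (@Lop R) v2.
  have mh : measurable_fun setT h by exact: measiterL.
  have -> : (Kop (KnLn k.+1 v2) \- KnLn k.+1 (Kop v2))%R =
            iter k.+1 (@Kop R) (Kop (Lop h) \- h).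
    rewrite iterK_sub /KnLn -iterSr; congr (_ \- _).
    by rewrite /h; congr (iter _ _ _); rewrite iterSr LK.
  rewrite l2iterK; last by apply: measurable_funB => //; apply: measK; exact: measL.
  exact: (le_trans (l2D h mh) (l2iterL k v2 m2)).
- set h := iter k.+1 (@Lop R) v1.
  have mh : measurable_fun setT h by exact: measiterL.
  have -> : (Lop (KnLn k.+1 v1) \- KnLn k.+1 (Lop v1))%R =
            iter k (@Kop R) (h \- Kop (Lop h)).
    rewrite iterK_sub /KnLn /= LK; congr (_ \- _).
    have E : iter k (@Lop R) (Lop v1) = h by rewrite /h iterSr.
    by rewrite E -iterSr.
  rewrite l2iterK; last by apply: measurable_funB => //; apply: measK; exact: measL.
  rewrite l2sqC; exact: (le_trans (l2D h mh) (l2iterL k.+1 v1 m1)).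
Qed.

Definition c (j : nat) : Omega -> R := fun x => if x j then 1 else -1.

Lemma Kc j : Kop (c j) = c j.+1. Proof. by []. Qed.
Lemma Lc j : Lop (c j.+1) = c j.
Proof. by apply: funext => x; rewrite /Lop /c /=; field. Qed.
Lemma Lc0 : Lop (c 0) = cst 0.
Proof. by apply: funext => x; rewrite /Lop /c /=; field. Qed.
Lemma L0 : Lop (cst 0 : Omega -> R) = cst 0.
Proof. by apply: funext => x; rewrite /Lop /=; field. Qed.
Lemma K0 : Kop (cst 0 : Omega -> R) = cst 0. Proof. by []. Qed.
Lemma iterL0 j : iter j (@Lop R) (cst 0) = cst 0.
Proof. by elim: j => [|j IH] //=; rewrite IH L0. Qed.
Lemma iterK0 j : iter j (@Kop R) (cst 0) = cst 0.
Proof. by elim: j => [|j IH] //=; rewrite IH. Qed.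
Lemma iterLc j : iter j (@Lop R) (c j) = c 0.
Proof. by elim: j => [|j IH] //; rewrite iterSr Lc. Qed.
Lemma iterKc j : iter j (@Kop R) (c 0) = c j.
Proof. by elim: j => [|j IH] //=; rewrite IH. Qed.

Lemma measc j : measurable_fun setT (c j).
Proof.
rewrite -iterKc; apply: measiterK.
apply: (@measurable_fun_ifT _ _ Omega R (cst 1) (cst (-1)) (fun x => x 0%N)).
- apply: (@measurable_fun_bool _ Omega _ _ true).
  have -> : setT `&` (fun x : Omega => x 0%N) @^-1` [set true] = cyl 1 (fun _ => true).
    apply/seteqP; split => x /=.
      by move=> [_ h] [|i] //.
    by move=> h; split => //; apply: h.
  exact: cyl_meas.
- exact: measurable_cst.
- exact: measurable_cst.
Qed.

Lemma l2one (f : Omega -> R) : (forall x, f x ^+ 2 = 1) -> l2sq mu f = 1%E.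
Proof.
move=> h; rewrite /l2sq (eq_integral (cst 1%E)); last by move=> x _; rewrite h.
by rewrite integral_cst // muT mul1e.
Qed.

Lemma l2zero (f : Omega -> R) : (forall x, f x = 0) -> l2sq mu f = 0%E.
Proof.
move=> h; rewrite /l2sq (eq_integral (cst 0%E)); last by move=> x _; rewrite h expr0n.
exact: integral0.
Qed.

Lemma lower (k : nat) : exists v : (Omega -> R) * (Omega -> R),
  (inH mu v /\ (hnorm mu v <= 1)%E) /\ (hnorm mu (commD (@KnLn R k.+1) v) = 1%E).
Proof.
exists (cst 0, c k); split; [split; [split|]|].
- split; first exact: measurable_cst.
  by rewrite /= l2zero // ltry.
- split; first exact: measc.
  by rewrite /= l2one ?ltry // => x; rewrite /c; case: (x k); rewrite ?expr1n ?sqrrN ?expr1n.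
- rewrite /hnorm /= l2zero // l2one ?add0e ?sqrtr1 //.
  by move=> x; rewrite /c; case: (x k); rewrite ?expr1n ?sqrrN ?expr1n.
rewrite /hnorm /commD /= /KnLn.
have e1 : iter k.+1 (@Lop R) (c k) = cst 0 by rewrite /= iterLc Lc0.
have e2 : iter k.+1 (@Lop R) (Kop (c k)) = c 0 by rewrite Kc iterLc.
rewrite e1 e2 iterKc !iterK0 !L0 !iterL0 !iterK0 ?L0.
rewrite [X in (_ + X)%E]l2zero; last by move=> x; rewrite /= subrr.
rewrite l2one ?adde0 ?sqrtr1 //.
by move=> x; rewrite /= /c; case: (x k.+1); rewrite sub0r ?sqrrN expr1n.
Qed.
End Meas.

Theorem theorem2p20 (R : realType) (mu : {measure set Omega -> \bar R})
  (hmu : forall (n : nat) (w : nat -> bool), mu (cyl n w) = ((2 ^-1) ^+ n)%:E)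
  (n : nat) (hn : (1 <= n)%N) :
  opnorm mu (commD (@KnLn R n)) = 1%E.
Proof.
case: n hn => [//|k] _.
apply/eqP; rewrite eq_le; apply/andP; split.
  apply: ge_ereal_sup => _ [v [[[m1 _] [m2 _]] Hn] <-].
  exact: le_trans (@upper R mu hmu k v m1 m2) Hn.
have [v [Hv <-]] := @lower R mu hmu k.
by apply: ereal_sup_ubound; exists v.
Qed.
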